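(* Let $W$ be a well generated complex reflection group and $W_X\le W$ a parabolic subgroup. Then an element $g\in W_X$ is parabolic quasi-Coxeter in $W_X$ if and only if it is parabolic quasi-Coxeter in $W$.
   Context: A complex reflection group $W\le\mathrm{GL}(V)$ is a finite group generated by unitary reflections; its rank is $\operatorname{codim}(V^W)$. A good generating set of a reflection group $G$ is a set of $\operatorname{rank}(G)$ reflections generating $G$; $W$ is well generated if it has one. Parabolic subgroups are pointwise stabilizers of subsets of $V$ (parabolic subgroups of well generated groups are well generated). $\ell_R$ denotes reflection length; a reflection factorization is reduced if its length equals $\ell_R$ of its product (computed in the ambient group considered). An element $g$ of a well generated group $G$ is parabolic quasi-Coxeter in $G$ if some reduced reflection factorization of $g$ in $G$ has factors forming a good generating set of some parabolic subgroup of $G$. *)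

(* Defs.v *)
From mathcomp Require Import all_boot all_algebra all_fingroup all_solvable all_field all_character.
Set Implicit Arguments. Unset Strict Implicit. Unset Printing Implicit Defensive.
Import GRing.Theory.
Local Open Scope ring_scope.

(* A complex reflection group W <= GL(V), V = row vectors 'rV_n, is modelled
   as a finite group W together with a faithful matrix representation rG
   (row vectors act on the right: v |-> v *m rG g). *)
Section ReflectionGroups.
Variables (F : fieldType) (gT : finGroupType) (G : {group gT}) (n : nat).
Variable rG : mx_representation F G n.

(* g is a reflection: its fixed space is a hyperplane, i.e. rank (g - 1) = 1 *)
Definition is_reflection (g : gT) : bool :=
  (g \in G) && (\rank (rG g - 1%:M) == 1%N).

Definition reflections (H : {set gT}) : {set gT} :=
  [set g in H | is_reflection g].

Definition refl_rank (H : {set gT}) : nat := (n - \rank (rfix_mx rG H))%N.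

Definition reflection_group (H : {set gT}) : Prop :=
  H = <<reflections H>>%g.

Definition good_gen_set (H T : {set gT}) : Prop :=
  [/\ T \subset reflections H, #|T| = refl_rank H & <<T>>%g = H].

Definition well_generated (H : {set gT}) : Prop :=
  exists T : {set gT}, good_gen_set H T.

Definition parabolic_in (H P : {set gT}) : Prop :=
  exists (m : nat) (U : 'M[F]_(m, n)), P = (rstab rG U :&: H)%g.

Definition refl_fact (H : {set gT}) (g : gT) (s : seq gT) : Prop :=
  all (fun t => t \in reflections H) s /\ (\prod_(t <- s) t)%g = g.

Definition reduced_refl_fact (H : {set gT}) (g : gT) (s : seq gT) : Prop :=
  refl_fact H g s /\ forall s', refl_fact H g s' -> (size s <= size s')%N.

Definition parabolic_quasi_coxeter (H : {set gT}) (g : gT) : Prop :=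
  exists s : seq gT, reduced_refl_fact H g s /\
    exists P : {set gT}, parabolic_in H P /\ good_gen_set P [set t in s].

End ReflectionGroups.

(* Main.v *)
Require Import Defs.
From mathcomp Require Import all_boot all_algebra all_fingroup all_solvable all_field all_character.
From mathcomp Require Import zify.
Set Implicit Arguments. Unset Strict Implicit. Unset Printing Implicit Defensive.
Import GRing.Theory Num.Theory.
Local Open Scope ring_scope.

Fixpoint mprod (F : fieldType) n (l : seq 'M[F]_n) : 'M[F]_n :=
  if l is A :: l' then A *m mprod l' else 1%:M.

Fixpoint root_sp (F : fieldType) n (l : seq 'M[F]_n) : 'M[F]_n :=
  if l is A :: l' then addsmx (A - 1%:M) (root_sp l') else 0.

Lemma mprod_cons (F : fieldType) n (A : 'M[F]_n) l :
  mprod (A :: l) - 1%:M = (A - 1%:M) + A *m (mprod l - 1%:M).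
Proof. by rewrite /= mulmxBr mulmx1 [RHS]addrC addrA subrK. Qed.

Lemma mprod_sub (F : fieldType) n (l : seq 'M[F]_n) : (mprod l - 1%:M <= root_sp l)%MS.
Proof.
elim: l => [|A l IH]; first by rewrite /= subrr sub0mx.
rewrite mprod_cons /=; apply: addmx_sub_adds => //.
exact: submx_trans (submxMl _ _) IH.
Qed.

Lemma root_rank (F : fieldType) n (l : seq 'M[F]_n) :
  (forall A, A \in l -> (\rank (A - 1%:M)%R <= 1)%N) -> (\rank (root_sp l) <= size l)%N.
Proof.
elim: l => [|A l IH] hl; first by rewrite /= mxrank0.
rewrite /=; apply: leq_trans (mxrank_adds_leqif _ _).1 _.
rewrite -add1n leq_add ?hl ?mem_head // IH // => B hB.
by rewrite hl // inE hB orbT.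
Qed.

Lemma carter (F : fieldType) n m (l : seq 'M[F]_n) (V : 'M[F]_(m, n)) :
  (forall A, A \in l -> (\rank (A - 1%:M)%R <= 1)%N) -> \rank (root_sp l) = size l ->
  V *m (mprod l - 1%:M) = 0 -> forall A, A \in l -> V *m A = V.
Proof.
elim: l V => [|A l IH] V hl hr hV B //.
have hl' : forall B, B \in l -> (\rank (B - 1%:M)%R <= 1)%N.
  by move=> C hC; rewrite hl // inE hC orbT.
have hA := hl A (mem_head _ _).
have hR := root_rank hl'.
move: hr; rewrite /= => hr.
have := mxrank_sum_cap (A - 1%:M) (root_sp l); rewrite hr => hsc.
have hc : \rank ((A - 1%:M)%R :&: root_sp l)%MS = 0%N by move: hA hR hsc => /=; lia.
have hr' : \rank (root_sp l) = size l by move: hA hR hsc => /=; lia.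
move: hV; rewrite mprod_cons mulmxDr mulmxA => hV.
have hX : V *m (A - 1%:M) = 0.
  apply/eqP; rewrite -submx0; apply: submx_trans (_ : (_ <= (A - 1%:M)%R :&: root_sp l)%MS) _.
    rewrite sub_capmx submxMl /=.
    have -> : V *m (A - 1%:M) = - (V *m A *m (mprod l - 1%:M)).
      by apply/eqP; rewrite -addr_eq0 hV.
    by rewrite eqmx_opp (submx_trans (submxMl _ _) (mprod_sub l)).
  by rewrite submx0 -mxrank_eq0 hc.
have hVA : V *m A = V by apply/eqP; rewrite -subr_eq0 -{2}(mulmx1 V) -mulmxBr hX.
move: hV; rewrite hX add0r hVA => hV.
rewrite inE => /orP[/eqP -> //|hB].
exact: IH hl' hr' hV B hB.
Qed.

Lemma repr_mprod (C : numClosedFieldType) (gT : finGroupType) (G : {group gT}) n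
   (rG : mx_representation C G n) (s : seq gT) :
  all (fun t => t \in G) s ->
  (\prod_(t <- s) t)%g \in G /\ rG (\prod_(t <- s) t)%g = mprod (map rG s).
Proof.
elim: s => [|t s IH]; first by rewrite big_nil group1 repr_mx1.
rewrite /= => /andP[ht hs]; have [h1 h2] := IH hs.
by rewrite big_cons groupM // repr_mxM // h2.
Qed.

Lemma gen_root (C : numClosedFieldType) (gT : finGroupType) (G : {group gT}) n
   (rG : mx_representation C G n) (T : {set gT}) (R : 'M[C]_n) :
  T \subset G -> (forall t, t \in T -> (rG t - 1%:M <= R)%MS) ->
  forall p, p \in <<T>>%g -> (rG p - 1%:M <= R)%MS.
Proof.
move=> sTG hT.
pose S := [set p in G | (rG p - 1%:M <= R)%MS].
have gS : group_set S.
  apply/andP; split; first by rewrite inE group1 repr_mx1 subrr sub0mx.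
  apply/subsetP=> z /mulsgP[x y hx hy ->]; move: hx hy; rewrite !inE => /andP[hx sx] /andP[hy sy].
  rewrite groupM // repr_mxM //=.
  have E : forall a b : 'M[C]_n, a *m b - 1%:M = (a - 1%:M) + (a - 1%:M) *m (b - 1%:M) + (b - 1%:M).
    move=> a b; rewrite mulmxBl mulmxBr mulmx1 mul1mx -addrA subrK.
    by rewrite [RHS]addrC [RHS]addrA subrK.
  rewrite E.
  apply: addmx_sub => //; apply: addmx_sub => //; exact: (submx_trans (submxMl _ _) sy).

have sTS : T \subset Group gS.
  by apply/subsetP=> t ht; rewrite inE (subsetP sTG) ?hT.
move=> p hp; have : p \in Group gS by apply: (subsetP _ p hp); rewrite gen_subG.
by rewrite inE => /andP[].
Qed.

Lemma avg (C : numClosedFieldType) (gT : finGroupType) (G : {group gT}) n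
   (rG : mx_representation C G n) (P : {group gT}) (R : 'M[C]_n) :
  P \subset G -> (forall p, p \in P -> (rG p - 1%:M <= R)%MS) ->
  (n <= \rank (rfix_mx rG P) + \rank R)%N.
Proof.
move=> sPG hP.
pose e := \sum_(p in P) rG p.
pose c : C := (#|P|%:R)^-1.
have hc : c * #|P|%:R = 1 by rewrite mulVf // pnatr_eq0 -lt0n cardG_gt0.
have he : (c *: e <= rfix_mx rG P)%MS.
  apply/rfix_mxP => x hx; rewrite -scalemxAl; congr (_ *: _).
  rewrite /e mulmx_suml.
  transitivity (\sum_(p in P) rG (p * x)%g).
    by apply: eq_bigr => p hp; rewrite repr_mxM // (subsetP sPG).
  rewrite [RHS](reindex_inj (mulIg x)) /=; apply: eq_bigl => p.
  by rewrite groupMr.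
have hr : (1%:M - c *: e <= R)%MS.
  have -> : 1%:M - c *: e = c *: \sum_(p in P) (1%:M - rG p).
    by rewrite sumrB sumr_const scalerBr -scalerMnr scalerMnl -mulr_natr hc scale1r.
  apply: scalemx_sub; apply: summx_sub => p hp.
  by rewrite -opprB eqmx_opp hP.
have h1 : (1%:M <= rfix_mx rG P + R)%MS.
  rewrite -[X in (X <= _)%MS](addrNK (c *: e)) addrC.
  exact: addmx_sub_adds.
rewrite -{1}(mxrank1 C n).
exact: leq_trans (mxrankS h1) (mxrank_adds_leqif _ _).1.
Qed.

Lemma rank_conj (C : numClosedFieldType) (gT : finGroupType) (G : {group gT}) n
   (rG : mx_representation C G n) x t : x \in G -> t \in G ->
  (\rank (rG (x ^ t)%g - 1%:M)%R <= \rank (rG x - 1%:M)%R)%N.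
Proof.
move=> hx ht.
have -> : rG (x ^ t)%g - 1%:M = rG t^-1%g *m (rG x - 1%:M) *m rG t.
  rewrite conjgE !repr_mxM ?groupV ?groupM //.
  rewrite mulmxBr mulmx1 mulmxBl mulmxA.
  by rewrite -[rG t^-1%g *m rG t]repr_mxM ?groupV // mulVg repr_mx1.
exact: leq_trans (mxrankM_maxl _ _) (mxrankM_maxr _ _).
Qed.

Lemma refl_conj (C : numClosedFieldType) (gT : finGroupType) (G : {group gT}) n
   (rG : mx_representation C G n) (H : {group gT}) x t :
  x \in reflections rG H -> t \in reflections rG H -> (x ^ t)%g \in reflections rG H.
Proof.
rewrite !inE /is_reflection => /and3P[hxH hx /eqP rx] /and3P[htH ht _].
rewrite groupJ // groupJ //=; apply/eqP; apply/anti_leq/andP; split.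
  by rewrite -rx rank_conj.
by rewrite -rx -{1}(conjgK t x) rank_conj ?groupV ?groupJ.
Qed.

Lemma refl_sq (C : numClosedFieldType) (gT : finGroupType) (G : {group gT}) n
   (rG : mx_representation C G n) (H : {group gT}) t :
  mx_faithful rG -> t \in reflections rG H -> (t * t != 1)%g ->
  (t * t)%g \in reflections rG H.
Proof.
move=> hf; rewrite !inE /is_reflection => /and3P[htH ht /eqP rt] htt.
rewrite !groupM //=; apply/eqP; apply/anti_leq/andP; split.
  have -> : rG (t * t)%g - 1%:M = (rG t - 1%:M) *m (rG t + 1%:M).
    rewrite repr_mxM // mulmxDr mulmx1 mulmxBl mul1mx.
    by rewrite addrA subrK.
  by rewrite -rt mxrankM_maxl.
rewrite lt0n mxrank_eq0 subr_eq0; apply: contra htt => /eqP h.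
by apply/eqP; apply: (mx_faithful_inj hf); rewrite ?groupM ?group1 // h repr_mx1.
Qed.

Lemma prod_conj (gT : finGroupType) (t : gT) (s : seq gT) :
  ((\prod_(u <- s) u) * t = t * \prod_(u <- map (fun u => u ^ t) s) u)%g.
Proof.
elim: s => [|u s IH]; first by rewrite !big_nil mul1g mulg1.
by rewrite /= !big_cons -mulgA IH mulgA (conjgC u t) -mulgA.
Qed.

Lemma shorten (C : numClosedFieldType) (gT : finGroupType) (G : {group gT}) n
   (rG : mx_representation C G n) (H : {group gT}) g s :
  mx_faithful rG -> refl_fact rG H g s -> ~~ uniq s ->
  exists s', refl_fact rG H g s' /\ (size s' < size s)%N.
Proof.
move=> hf; elim: s g => [|t s1 IH] g [hall hprod] //=.
move: hall => /= /andP[ht hall1].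
rewrite negb_and negbK => /orP[ts1|nu]; last first.
  have [s1' [[h1 h2] h3]] := IH (\prod_(u <- s1) u)%g (conj hall1 erefl) nu.
  exists (t :: s1'); split; last by [].
  by split; [rewrite /= ht h1 | rewrite big_cons h2 -hprod big_cons].
case/splitPr: ts1 hall1 hprod => s2 s3 hall1 hprod.
set tt := (t * t)%g.
have hpre : (\prod_(u <- (if tt == 1%g then [::] else [:: tt])) u)%g = tt.
  by case: eqP => [->|_]; rewrite ?big_nil ?big_seq1.
exists ((if tt == 1%g then [::] else [:: tt]) ++ map (fun u => u ^ t)%g s2 ++ s3).
split; last first.
  by rewrite !size_cat size_map /=; case: (tt == 1%g) => /=; lia.
move: hall1; rewrite all_cat /= => /and3P[hs2 htt hs3].
split.
  rewrite !all_cat hs3 andbT; apply/andP; split.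
    by case: eqP => //= /eqP ntt; rewrite andbT refl_sq.
  by rewrite all_map; apply/allP => u hu /=; apply: refl_conj => //; apply: (allP hs2).
rewrite !big_cat /= hpre -hprod big_cons big_cat big_cons /=.
by rewrite [X in _ = (t * X)%g]mulgA (prod_conj t s2) /tt !mulgA.
Qed.

Lemma reduced_uniq (C : numClosedFieldType) (gT : finGroupType) (G : {group gT}) n
   (rG : mx_representation C G n) (H : {group gT}) g s :
  mx_faithful rG -> reduced_refl_fact rG H g s -> uniq s.
Proof.
move=> hf [hs hmin]; apply/negPn/negP => nu.
have [s' [hs' lt]] := shorten hf hs nu.
by have := hmin s' hs'; rewrite leqNgt lt.
Qed.

Lemma root_mem (F : fieldType) n (l : seq 'M[F]_n) A : A \in l -> (A - 1%:M <= root_sp l)%MS.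
Proof.
elim: l => [|B l IH] //; rewrite inE => /orP[/eqP ->|hA] /=.
  exact: addsmxSl.
exact: submx_trans (IH hA) (addsmxSr _ _).
Qed.

Lemma key (C : numClosedFieldType) (gT : finGroupType) (G : {group gT}) n
   (rG : mx_representation C G n) (H : {group gT}) (P : {set gT}) g s :
  mx_faithful rG -> reduced_refl_fact rG H g s -> good_gen_set rG P [set t in s] ->
  (forall m (V : 'M[C]_(m, n)), V *m rG g = V -> forall t, t \in s -> V *m rG t = V) /\
  (forall s', refl_fact rG G g s' -> (size s <= size s')%N).
Proof.
move=> hf hred [sTP hcard hgen].
have hu := reduced_uniq hf hred.
case: hred => [[hall hprod] hmin].
have hsG : all (fun t => t \in G) s.
  by apply/allP => t /(allP hall); rewrite inE /is_reflection => /and3P[].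
have hrk : forall A, A \in map rG s -> (\rank (A - 1%:M)%R <= 1)%N.
  move=> A /mapP[t /(allP hall)]; rewrite inE /is_reflection => /and3P[_ _ /eqP h] ->.
  by rewrite h.
have [_ hg] := repr_mprod rG hsG; rewrite hprod in hg.
have sTG : [set t in s] \subset G.
  by apply/subsetP => t; rewrite inE => /(allP hsG).
have hroot : forall p, p \in <<[set t in s]>>%g -> (rG p - 1%:M <= root_sp (map rG s))%MS.
  apply: gen_root sTG _ => t; rewrite inE => ht.
  exact: root_mem (map_f rG ht).
have sPG : <<[set t in s]>>%g \subset G by rewrite gen_subG.
have havg : (n <= \rank (rfix_mx rG <<[set t in s]>>%g) + \rank (root_sp (map rG s)))%N
  := avg (P := <<[set t in s]>>%G) sPG hroot.
have hsz : #|[set t in s]| = size s by rewrite cardsE; apply/card_uniqP.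
move: hcard; rewrite hsz /refl_rank -hgen => hcard.
have hrR := root_rank hrk; rewrite size_map in hrR.
have hrf := rank_leq_col (rfix_mx rG <<[set t in s]>>%g).
have hR : \rank (root_sp (map rG s)) = size (map rG s).
  by rewrite size_map; apply/eqP; rewrite eqn_leq hrR /= hcard leq_subLR.
have K1 : forall m (V : 'M[C]_(m, n)), V *m rG g = V -> forall t, t \in s -> V *m rG t = V.
  move=> m V hV t ht.
  apply: (carter hrk hR _ (map_f rG ht)).
  by rewrite -hg mulmxBr mulmx1 hV subrr.
split => // s' [hall' hprod'].
have hsG' : all (fun t => t \in G) s'.
  by apply/allP => t /(allP hall'); rewrite inE /is_reflection => /and3P[].
have hrk' : forall A, A \in map rG s' -> (\rank (A - 1%:M)%R <= 1)%N.
  move=> A /mapP[t /(allP hall')]; rewrite inE /is_reflection => /and3P[_ _ /eqP h] ->.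
  by rewrite h.
have [_ hg'] := repr_mprod rG hsG'; rewrite hprod' in hg'.
have h1 : (\rank (rG g - 1%:M)%R <= size s')%N.
  rewrite hg'; apply: leq_trans (mxrankS (mprod_sub _)) _.
  by rewrite -(size_map rG); apply: root_rank.
have h2 : (kermx (rG g - 1%:M) <= rfix_mx rG <<[set t in s]>>%g)%MS.
  apply/rfix_mxP => x hx.
  have sT : [set t in s] \subset rstab rG (kermx (rG g - 1%:M)).
    apply/subsetP => t; rewrite inE => ht.
    rewrite inE (allP hsG t ht) /=; apply/eqP; apply: K1 ht.
    by apply/eqP; rewrite -subr_eq0 -{2}(mulmx1 (kermx _)) -mulmxBr mulmx_ker.
  have sP : <<[set t in s]>>%g \subset rstab rG (kermx (rG g - 1%:M)) by rewrite gen_subG.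
  by move: (subsetP sP x hx); rewrite inE => /andP[_ /eqP].
have := mxrankS h2; rewrite mxrank_ker.
have := rank_leq_col (rG g - 1%:M).
move: h1 hcard hrf; lia.
Qed.

Lemma rstab_col (C : numClosedFieldType) (gT : finGroupType) (G : {group gT}) n
   (rG : mx_representation C G n) m1 m2 (U1 : 'M[C]_(m1, n)) (U2 : 'M[C]_(m2, n)) :
  rstab rG (col_mx U1 U2) = (rstab rG U1 :&: rstab rG U2)%g.
Proof.
apply/setP => x; rewrite !inE mul_col_mx.
case: (x \in G) => //=; apply/eqP/andP => [/eq_col_mx [-> ->] //|[/eqP -> /eqP ->] //].
Qed.

Theorem mainTheorem6 (C : numClosedFieldType) (gT : finGroupType)
    (W : {group gT}) (n : nat) (rW : mx_representation C W n)
    (X : {set gT}) (g : gT) :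
  mx_faithful rW ->
  reflection_group rW W ->
  well_generated rW W ->
  parabolic_in rW W X ->
  g \in X ->
  parabolic_quasi_coxeter rW X g <-> parabolic_quasi_coxeter rW W g.
Proof.
move=> hf _ _ [m [U ->]] hg.
have sXW : (rstab rW U :&: W)%g \subset W by apply: subsetIr.
split.
  move=> [s [hred [P [[m' [U' hP]] hgood]]]].
  have [_ K2] := key (H := (rstab rW U :&: W)%G) hf hred hgood.
  exists s; split.
    case: hred => [[hall hprod] _]; split => //; split => //.
    apply/allP => t /(allP hall); rewrite !inE => /andP[/andP[_ htW] ->].
    by rewrite htW.
  exists P; split => //; exists (m' + m)%N, (col_mx U' U).
  by rewrite hP rstab_col setIA.
move=> [s [hred [P [[m' [U' hP]] hgood]]]].
have [K1 _] := key (H := W) hf hred hgood.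
have hUg : U *m rW g = U by move: hg; rewrite !inE => /andP[/andP[_ /eqP]].
have hsX : forall t, t \in s -> t \in (rstab rW U :&: W)%g.
  move=> t ht; case: hred => [[hall _] _].
  have := allP hall t ht; rewrite !inE => /andP[htW _].
  by rewrite htW (K1 _ _ hUg t ht) eqxx.
exists s; split.
  case: hred => [[hall hprod] hmin]; split.
    split => //; apply/allP => t ht; have := allP hall t ht.
    move: (hsX t ht); rewrite !inE => /andP[/andP[h1 h2] h3] /andP[_ h4]; by rewrite h1 h2 h4.
  move=> s' [hall' hprod']; apply: hmin; split => //.
  apply/allP => t /(allP hall'); rewrite !inE => /andP[/andP[_ htW] ->].
  by rewrite htW.
exists P; split => //; exists m', U'.
case: (hgood) => _ _ hgen.
have sPX : P \subset (rstab rW U :&: W)%g.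
  by rewrite -hgen gen_subG; apply/subsetP => t; rewrite inE; apply: hsX.
by rewrite -{1}(setIidPl sPX) hP -setIA (setIidPr sXW).
Qed.
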